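(* If $P_1$ and $P_2$ are disjoint signed posets then $Y_{P_1\sqcup P_2}=Y_{P_1}Y_{P_2}$; consequently $\mathbb{Y}$ is closed under multiplication and $\phi(fg)=\phi(f)\phi(g)$ for all $f,g\in\mathbb{Y}$.
   Context: A signed graph is a finite graph (loops and multiple edges allowed) with $\mathrm{sgn}:E\to\{+,-\}$; a coloring $\kappa:V\to\mathbb{Z}$ is proper if $\kappa(u)\ne\mathrm{sgn}(e)\kappa(v)$ for every edge $e$ with endpoints $u,v$. An orientation assigns to each half-edge (a loop has two) an arrow toward or away from the vertex, such that on a positive edge exactly one of the two arrows points toward its vertex and on a negative edge both point toward or both point away. A cycle is a closed walk in which, considering only the edges of the walk, every vertex of the walk has at least one arrow pointing into it and one pointing out of it; an orientation is acyclic if it has no cycle; a sink is a vertex all of whose incident arrows point toward it (an isolated vertex is a sink). A signed poset is an acyclic orientation $P$ of a signed graph; $P_1\sqcup P_2$ denotes the orientation of the disjoint union. A proper coloring $\kappa$ preserves $P$ if for every edge $e$ and each endpoint $v$ of $e$, with $u$ the other endpoint ($u=v$ for a loop), the arrow of $P$ at the incidence of $e$ with $v$ points toward $v$ iff $\kappa(v)>\mathrm{sgn}(e)\kappa(u)$. $Y_P=\sum_\kappa\prod_v x_{\kappa(v)}$ over proper colorings preserving $P$ (variables $x_i$, $i\in\mathbb{Z}$); $\mathbb{Y}$ is the $\mathbb{Q}$-span of all $Y_P$; $\phi:\mathbb{Y}\to\mathbb{Q}[t]$ is the (unique) $\mathbb{Q}$-linear map with $\phi(Y_P)=t^{\mathrm{sink}(P)}$,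 $\mathrm{sink}(P)$ being the number of sinks of $P$ (its existence is established in the paper). *)

(* Defs.v *)
From HB Require Import structures.
From mathcomp Require Import all_boot all_order all_algebra.
Set Implicit Arguments. Unset Strict Implicit. Unset Printing Implicit Defensive.
Import Order.TTheory GRing.Theory Num.Theory.
Local Open Scope ring_scope.

(* Each edge e has
   two ends (half-edges) indexed by a boolean c; [send e c] is the vertex at
   end c.  A loop is an edge with [send e false = send e true].
   [ssgn e = true] means the edge is positive, [false] means negative. *)
Record sgraph := SGraph {
  svert : finType;
  sedge : finType;
  send : sedge -> bool -> svert;
  ssgn : sedge -> bool }.

(* An (arrow assignment on the half-edges): [o e c = true] iff the arrow at
   the incidence of e at its end c points toward the vertex [send e c]. *)
Definition arrows (G : sgraph) := sedge G -> bool -> bool.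

Definition is_orientation (G : sgraph) (o : arrows G) : Prop :=
  forall e : sedge G,
    if ssgn e then o e false != o e true else o e false == o e true.

(* A step (e, c) of a walk traverses e from its end c to its end ~~c. *)
Definition step_src (G : sgraph) (s : sedge G * bool) := send s.1 s.2.
Definition step_dst (G : sgraph) (s : sedge G * bool) := send s.1 (~~ s.2).

Definition closed_walk (G : sgraph) (w : seq (sedge G * bool)) : bool :=
  (w != [::]) && cycle (fun s t => step_dst s == step_src t) w.

Definition is_cycle (G : sgraph) (o : arrows G) (w : seq (sedge G * bool)) : Prop :=
  closed_walk w /\
  forall v, v \in [seq step_src s | s <- w] ->
    (exists e c, e \in [seq s.1 | s <- w] /\ send e c = v /\ o e c = true) /\
    (exists e c, e \in [seq s.1 | s <- w] /\ send e c = v /\ o e c = false).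

Definition acyclic (G : sgraph) (o : arrows G) : Prop :=
  forall w, ~ is_cycle o w.

Definition signed_poset (G : sgraph) (o : arrows G) : Prop :=
  is_orientation o /\ acyclic o.

(* sinks: all incident arrows point toward v (isolated vertices are sinks) *)
Definition is_sink (G : sgraph) (o : arrows G) (v : svert G) : bool :=
  [forall e, forall c, (send e c == v) ==> o e c].

Definition nsinks (G : sgraph) (o : arrows G) : nat := #|[pred v | is_sink o v]|.

Definition gunion (G1 G2 : sgraph) : sgraph :=
  @SGraph (svert G1 + svert G2)%type (sedge G1 + sedge G2)%type
    (fun e c => match e with inl e1 => inl (send e1 c) | inr e2 => inr (send e2 c) end)
    (fun e => match e with inl e1 => ssgn e1 | inr e2 => ssgn e2 end).

Definition aunion (G1 G2 : sgraph) (o1 : arrows G1) (o2 : arrows G2)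
  : arrows (gunion G1 G2) :=
  fun e c => match e with inl e1 => o1 e1 c | inr e2 => o2 e2 c end.

Definition sgnval (G : sgraph) (e : sedge G) (x : int) : int :=
  if ssgn e then x else - x.

Definition proper (G : sgraph) (k : svert G -> int) : bool :=
  [forall e, forall c, k (send e c) != sgnval e (k (send e (~~ c)))].

Definition preserves (G : sgraph) (o : arrows G) (k : svert G -> int) : bool :=
  [forall e, forall c, o e c == (sgnval e (k (send e (~~ c))) < k (send e c))].

(* A monomial is represented by a list m of integers (the multiset of indices;
   m stands for \prod_(i <- m) x_i); a series is its coefficient function.
   All series considered here are invariant under permutation of m. *)
Definition series := seq int -> rat.

(* coefficient of the monomial m in Y_P: number of proper colorings preserving
   o whose multiset of colours is m (such colourings take values in m). *)
Definition Ycoef (G : sgraph) (o : arrows G) (m : seq int) : nat :=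
  #|[set kap : {ffun svert G -> seq_sub m} |
      let k := fun v => ssval (kap v) in
      [&& proper k, preserves o k & perm_eq [seq k v | v : svert G] m]]|.

Definition Y (G : sgraph) (o : arrows G) : series := fun m => (Ycoef o m)%:R.

(* all ways of splitting the multiset m into two sub-multisets
   (each split listed once, in sorted normal form) *)
Definition isort (s : seq int) := sort (fun x y : int => x <= y) s.
Definition splits (m : seq int) : seq (seq int * seq int) :=
  undup [seq (isort (mask (val b) m), isort (mask (map negb (val b)) m))
        | b <- enum {: (size m).-tuple bool}].

(* product of series (for permutation-invariant series) *)
Definition smul (f g : series) : series :=
  fun m => \sum_(p <- splits m) f p.1 * g p.2.

Definition inY (f : series) : Prop :=
  exists (n : nat) (a : 'I_n -> rat) (G : 'I_n -> sgraph)
         (o : forall i, arrows (G i)),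
    (forall i, signed_poset (o i)) /\
    f = (fun m => \sum_(i < n) a i * Y (o i) m).

(* Main.v *)
Require Import Defs.
From mathcomp Require Import all_boot all_order all_algebra.
From Stdlib Require Import FunctionalExtensionality.
Import Order.TTheory GRing.Theory Num.Theory.
Local Open Scope ring_scope.

Lemma isort_perm (s1 s2 : seq int) : reflect (isort s1 = isort s2) (perm_eq s1 s2).
Proof.
apply: perm_sortP.
- by move=> x y; apply: le_total.
- by move=> x y z; apply: le_trans.
- by move=> x y; apply: le_anti.
Qed.

Lemma mask_split (m : seq int) (b : seq bool) : size b = size m ->
  perm_eq (mask b m ++ mask (map negb b) m) m.
Proof.
elim: m b => [|x m IH] [|b0 b] //= [sz].
case: b0 => /=.
- by rewrite perm_cons IH.
- by rewrite -[x :: mask _ _]cat1s perm_catCA /= perm_cons IH.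
Qed.

Lemma mask_exists (m c1 c2 : seq int) : perm_eq (c1 ++ c2) m ->
  exists b : seq bool, [/\ size b = size m, perm_eq c1 (mask b m)
     & perm_eq c2 (mask (map negb b) m)].
Proof.
elim: m c1 c2 => [|x m IH] c1 c2 H.
  have := perm_size H; rewrite size_cat /=.
  case: c1 {H} => [|? ?] //; case: c2 => [|? ?] // _.
  by exists [::].
have : x \in c1 ++ c2 by rewrite (perm_mem H) mem_head.
rewrite mem_cat => /orP [] Hx.
- have H1 := perm_to_rem Hx.
  have H' : perm_eq (rem x c1 ++ c2) m.
    by rewrite -(perm_cons x) -(permPr H) -cat_cons perm_cat2r perm_sym.
  have [b [sz P1 P2]] := IH _ _ H'.
  exists (true :: b); split => //=; first by rewrite sz.
  by rewrite (permPl H1) perm_cons.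
- have H1 := perm_to_rem Hx.
  have H' : perm_eq (c1 ++ rem x c2) m.
    rewrite -(perm_cons x) -(permPr H) -cat1s perm_catCA /=.
    by rewrite perm_cat2l perm_sym.
  have [b [sz P1 P2]] := IH _ _ H'.
  exists (false :: b); split => //=; first by rewrite sz.
  by rewrite (permPl H1) perm_cons.
Qed.

Lemma sum_count {T : Type} (P : pred T) (s : seq T) :
  (\sum_(x <- s) (P x : nat) = count P s)%N.
Proof. by elim: s => [|x s IH]; rewrite ?big_nil ?big_cons //= IH. Qed.

Lemma perm_isort (c s : seq int) : perm_eq c (isort s) = perm_eq c s.
Proof. by rewrite perm_sym /isort perm_sort perm_sym. Qed.

Lemma mem_splits (m c1 c2 : seq int) :
  ((isort c1, isort c2) \in splits m) = perm_eq (c1 ++ c2) m.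
Proof.
rewrite /splits mem_undup; apply/mapP/idP.
- move=> [b _ [E1 E2]].
  have P1 : perm_eq c1 (mask b m) by apply/isort_perm.
  have P2 : perm_eq c2 (mask (map negb b) m) by apply/isort_perm.
  rewrite (permPl (perm_cat P1 P2)).
  by apply: mask_split; rewrite size_tuple.
- move/mask_exists => [b [sz P1 P2]].
  have szb : size b == size m by rewrite sz.
  exists (Tuple szb); first by rewrite mem_enum.
  by rewrite /=; congr pair; apply/isort_perm.
Qed.

Lemma splits_count (m c1 c2 : seq int) :
  (\sum_(p <- splits m) ((perm_eq c1 p.1 && perm_eq c2 p.2) : nat)
   = (perm_eq (c1 ++ c2) m : nat))%N.
Proof.
have E : forall p, p \in splits m ->
    (perm_eq c1 p.1 && perm_eq c2 p.2) = (p == (isort c1, isort c2)).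
  move=> p; rewrite /splits mem_undup => /mapP [b _ ->] /=.
  rewrite !perm_isort xpair_eqE.
  by congr andb; rewrite eq_sym; apply/isort_perm/eqP.
rewrite (eq_big_seq (fun p => (p == (isort c1, isort c2)) : nat)); last first.
  by move=> p /E ->.
rewrite (sum_count (pred1 (isort c1, isort c2))) count_uniq_mem ?undup_uniq //.
by rewrite mem_splits.
Qed.

Set Implicit Arguments. Unset Strict Implicit. Unset Printing Implicit Defensive.

Definition Pk (G : sgraph) (o : arrows G) (m : seq int) (k : svert G -> int) : bool :=
  [&& Defs.proper k, preserves o k & perm_eq [seq k v | v : svert G] m].

Definition cnt (G : sgraph) (o : arrows G) (M m : seq int) : nat :=
  #|[set kap : {ffun svert G -> seq_sub M} | Pk o m (fun v => ssval (kap v))]|.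

Lemma Ycoef_cnt G (o : arrows G) m : Ycoef o m = cnt o m m.
Proof. by []. Qed.

Lemma eq_Pk G (o : arrows G) m (k1 k2 : svert G -> int) : k1 =1 k2 -> Pk o m k1 = Pk o m k2.
Proof.
move=> E; rewrite /Pk.
have -> : [seq k1 v | v : svert G] = [seq k2 v | v : svert G] by apply: eq_map.
have -> : Defs.proper k1 = Defs.proper k2.
  by apply: eq_forallb => e; apply: eq_forallb => c; rewrite !E.
have -> : preserves o k1 = preserves o k2.
  by apply: eq_forallb => e; apply: eq_forallb => c; rewrite !E.
by [].
Qed.

Lemma cnt_sub G (o : arrows G) (M M' m : seq int) :
  {subset M <= M'} -> {subset m <= M} -> cnt o M m = cnt o M' m.
Proof.
move=> sMM' smM.
pose emb (kap : {ffun svert G -> seq_sub M}) : {ffun svert G -> seq_sub M'} :=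
  [ffun v => SeqSub (sMM' _ (ssvalP (kap v)))].
have emb_inj : injective emb.
  move=> k1 k2 /ffunP E; apply/ffunP => v; have := E v; rewrite !ffunE.
  by move=> [] H; apply/val_inj.
rewrite /cnt -(card_imset _ emb_inj); congr (#|pred_of_set _|).
apply/setP => k'; rewrite [in RHS]inE; apply/imsetP/idP.
- move=> [k]; rewrite inE => Hk ->.
  by rewrite (eq_Pk _ _ (k2 := fun v => ssval (k v))) // => v; rewrite ffunE.
- move=> Hk.
  have H : forall v, ssval (k' v) \in M.
    move=> v; apply: smM; case/and3P: Hk => _ _ /perm_mem <-.
    by apply/mapP; exists v; rewrite ?mem_enum.
  exists [ffun v => (SeqSub (H v) : seq_sub M)].
    by rewrite inE; rewrite (eq_Pk _ _ (k2 := fun v => ssval (k' v))) // => v; rewrite ffunE.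
  by apply/ffunP => v; rewrite !ffunE; apply/val_inj.
Qed.

Lemma card_sum_nat (T : finType) (b : pred T) : #|[set x | b x]| = (\sum_x (b x : nat))%N.
Proof.
rewrite cardsE -sum1_card big_mkcond /=; apply: eq_bigr => x _.
by rewrite unfold_in; case: (b x).
Qed.

Lemma proper_union G1 G2 (k : svert (gunion G1 G2) -> int) :
  Defs.proper k = Defs.proper (fun v => k (inl v)) && Defs.proper (fun v => k (inr v)).
Proof.
apply/forallP/andP => [H|[/forallP H1 /forallP H2]].
- by split; apply/forallP => e; [have := H (inl e) | have := H (inr e)].
- by case=> e; [apply: H1 | apply: H2].
Qed.

Lemma preserves_union G1 G2 (o1 : arrows G1) (o2 : arrows G2)
  (k : svert (gunion G1 G2) -> int) :
  preserves (aunion o1 o2) k =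
    preserves o1 (fun v => k (inl v)) && preserves o2 (fun v => k (inr v)).
Proof.
apply/forallP/andP => [H|[/forallP H1 /forallP H2]].
- by split; apply/forallP => e; [have := H (inl e) | have := H (inr e)].
- by case=> e; [apply: H1 | apply: H2].
Qed.

Lemma colors_union G1 G2 (k : svert (gunion G1 G2) -> int) :
  perm_eq [seq k v | v : svert (gunion G1 G2)]
    ([seq k (inl v) | v : svert G1] ++ [seq k (inr v) | v : svert G2]).
Proof.
have -> : [seq k (inl v) | v : svert G1] ++ [seq k (inr v) | v : svert G2] =
   map k (map inl (enum (svert G1)) ++ map inr (enum (svert G2))).
  by rewrite map_cat; congr (_ ++ _); apply: map_comp.
apply: (@perm_map _ _ k (enum (svert (gunion G1 G2)))).
have iL : injective (@inl (svert G1) (svert G2)) by move=> ? ? [].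
have iR : injective (@inr (svert G1) (svert G2)) by move=> ? ? [].
apply: uniq_perm.
- exact: enum_uniq.
- rewrite cat_uniq (map_inj_uniq iL) (map_inj_uniq iR) !enum_uniq /=.
  rewrite andbT; apply/hasPn => x /mapP [y _ ->] /=.
  by apply/mapP => [[z _]].
- move=> [v|v]; rewrite mem_enum mem_cat; apply/esym/orP.
  + by left; apply/mapP; exists v; rewrite ?mem_enum.
  + by right; apply/mapP; exists v; rewrite ?mem_enum.
Qed.

Lemma splits_sub (m : seq int) p : p \in splits m -> {subset p.1 <= m}.
Proof.
rewrite /splits mem_undup => /mapP [b _ ->] x /=.
by rewrite /isort mem_sort => /mem_mask.
Qed.

Lemma splits_sub2 (m : seq int) p : p \in splits m -> {subset p.2 <= m}.
Proof.
rewrite /splits mem_undup => /mapP [b _ ->] x /=.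
by rewrite /isort mem_sort => /mem_mask.
Qed.

Lemma split_aux (a1 a2 b1 b2 : bool) (c1 c2 m : seq int) :
  ([&& a1 && a2, b1 && b2 & perm_eq (c1 ++ c2) m] : nat) =
  (\sum_(p <- splits m) ([&& a1, b1 & perm_eq c1 p.1] : nat) *
                        ([&& a2, b2 & perm_eq c2 p.2] : nat))%N.
Proof.
case: a1; case: a2; case: b1; case: b2 => /=;
  try by (rewrite big1 // => p _; rewrite ?mul0n ?muln0).
rewrite -splits_count; apply: eq_bigr => p _.
by case: (perm_eq c1 p.1); case: (perm_eq c2 p.2).
Qed.

Lemma Ycoef_union G1 G2 (o1 : arrows G1) (o2 : arrows G2) m :
  Ycoef (aunion o1 o2) m = (\sum_(p <- splits m) Ycoef o1 p.1 * Ycoef o2 p.2)%N.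
Proof.
rewrite Ycoef_cnt /cnt card_sum_nat.
pose h (q : {ffun svert G1 -> seq_sub m} * {ffun svert G2 -> seq_sub m}) :
  {ffun svert (gunion G1 G2) -> seq_sub m} :=
  [ffun x => match x with inl v => q.1 v | inr v => q.2 v end].
have hbij : bijective h.
  apply: (@Bijective _ _ h (fun kap => ([ffun v => kap (inl v)], [ffun v => kap (inr v)]))).
  - by move=> [k1 k2]; congr pair; apply/ffunP => v; rewrite !ffunE.
  - by move=> kap; apply/ffunP => [[v|v]]; rewrite !ffunE.
rewrite (reindex h (onW_bij _ hbij)) /=.
rewrite -(pair_bigA _ (fun k1 k2 =>
   (Pk (aunion o1 o2) m (fun v => ssval (h (k1, k2) v)) : nat))) /=.
have E : forall k1 k2,
  (Pk (aunion o1 o2) m (fun v => ssval (h (k1, k2) v)) : nat) =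
  (\sum_(p <- splits m) (Pk o1 p.1 (fun v => ssval (k1 v)) : nat) *
                        (Pk o2 p.2 (fun v => ssval (k2 v)) : nat))%N.
  move=> k1 k2.
  rewrite (@eq_Pk (gunion G1 G2) (aunion o1 o2) m _ (fun x : svert (gunion G1 G2) => match x with inl v => ssval (k1 v)
                                     | inr v => ssval (k2 v) end)); last first.
    by move=> [v|v]; rewrite ffunE.
  rewrite /Pk proper_union preserves_union (permPl (colors_union _)) /=.
  exact: split_aux.
under eq_bigr => k1 _ do under eq_bigr => k2 _ do rewrite E.
under eq_bigr => k1 _ do rewrite exchange_big /=.
rewrite exchange_big /=; apply: eq_big_seq => p Hp.
under eq_bigr => k1 _ do rewrite -big_distrr /=.
rewrite -big_distrl /= !Ycoef_cnt.
rewrite (cnt_sub o1 (splits_sub Hp) (fun x => id)).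
rewrite (cnt_sub o2 (splits_sub2 Hp) (fun x => id)).
by rewrite /cnt !card_sum_nat.
Qed.

Lemma cycle_embed (G H : sgraph) (o : arrows H) (oG : arrows G)
  (fe : sedge G -> sedge H) (fv : svert G -> svert H) :
  injective fv -> (forall e c, send (fe e) c = fv (send e c)) ->
  (forall e c, o (fe e) c = oG e c) ->
  forall w1, is_cycle o [seq (fe s.1, s.2) | s <- w1] -> is_cycle oG w1.
Proof.
move=> fvI sendE oE w1 [/andP [nz cw] H1]; split.
  apply/andP; split; first by case: w1 nz {cw H1}.
  have E : relpre (fun s : sedge G * bool => (fe s.1, s.2))
     (fun s t : sedge H * bool => step_dst s == step_src t) =2
     (fun s t : sedge G * bool => step_dst s == step_src t).
    by move=> s t; rewrite /= /step_dst /step_src /= !sendE (inj_eq fvI).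
  by move: cw; rewrite cycle_map (eq_cycle E).
move=> v Hv.
have Hv' : fv v \in [seq step_src s | s <- [seq (fe s.1, s.2) | s <- w1]].
  move/mapP: Hv => [s Hs ->]; apply/mapP; exists (fe s.1, s.2).
    by apply/mapP; exists s.
  by rewrite /step_src /= sendE.
have [[e [c [He [Hs Ho]]]] [e' [c' [He' [Hs' Ho']]]]] := H1 _ Hv'.
move: He He'; rewrite -map_comp => /mapP [s1 Hs1 Ee] /mapP [s2 Hs2 Ee'].
rewrite /= in Ee Ee'; subst e e'.
split.
- exists s1.1, c; split; first by apply/mapP; exists s1.
  by split; [apply: fvI; rewrite -sendE | rewrite -oE].
- exists s2.1, c'; split; first by apply/mapP; exists s2.
  by split; [apply: fvI; rewrite -sendE | rewrite -oE].
Qed.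

Definition isl (A B : Type) (s : (A + B) * bool) : bool :=
  if s.1 is inl _ then true else false.

Lemma extract_l (A B : Type) (w : seq ((A + B) * bool)) :
  all (fun s => isl s == true) w ->
  exists w1, w = [seq (@inl A B s.1, s.2) | s <- w1].
Proof.
elim: w => [|[[e|e] c] w IH] /=; first by exists [::].
- by case/IH => w1 ->; exists ((e, c) :: w1).
- by [].
Qed.

Lemma extract_r (A B : Type) (w : seq ((A + B) * bool)) :
  all (fun s => isl s == false) w ->
  exists w1, w = [seq (@inr A B s.1, s.2) | s <- w1].
Proof.
elim: w => [|[[e|e] c] w IH] /=; first by exists [::].
- by [].
- by case/IH => w1 ->; exists ((e, c) :: w1).
Qed.

Lemma path_isl G1 G2 (x : sedge (gunion G1 G2) * bool) p :
  path (fun s t => step_dst s == step_src t) x p ->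
  all (fun y => isl y == isl x) p.
Proof.
elim: p x => [|y p IH] x //= /andP [Hxy Hp].
have E : isl y = isl x.
  move: Hxy; case: x => [[e|e] c]; case: y {Hp IH} => [[e'|e'] c'] //.
rewrite E eqxx /=.
by have := IH _ Hp; rewrite E.
Qed.

Lemma union_acyclic G1 G2 (o1 : arrows G1) (o2 : arrows G2) :
  acyclic o1 -> acyclic o2 -> acyclic (aunion o1 o2).
Proof.
move=> a1 a2 w Hc; have Hc' := Hc; case: Hc' => /andP [nz cw] _.
case: w nz cw Hc => [|x p] // _ cw Hc.
have Hall : all (fun y => isl y == isl x) (x :: p).
  rewrite /= eqxx /=.
  move: cw; rewrite /cycle => /path_isl.
  by rewrite all_rcons => /andP [].
case Ex: (isl x) Hall => Hall.
- have [w1 Ew] := extract_l Hall.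
  apply: (a1 w1); rewrite Ew in Hc.
  apply: (@cycle_embed G1 (gunion G1 G2) (aunion o1 o2) o1 inl inl _ _ _ _ Hc) => //.
  by move=> ? ? [].
- have [w1 Ew] := extract_r Hall.
  apply: (a2 w1); rewrite Ew in Hc.
  apply: (@cycle_embed G2 (gunion G1 G2) (aunion o1 o2) o2 inr inr _ _ _ _ Hc) => //.
  by move=> ? ? [].
Qed.

Lemma union_poset G1 G2 (o1 : arrows G1) (o2 : arrows G2) :
  signed_poset o1 -> signed_poset o2 -> signed_poset (aunion o1 o2).
Proof.
move=> [or1 a1] [or2 a2]; split; last exact: union_acyclic.
by case=> e; [apply: or1 | apply: or2].
Qed.

Lemma card_pred_sum (T : finType) (b : pred T) : #|[pred x | b x]| = (\sum_x (b x : nat))%N.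
Proof.
rewrite -sum1_card big_mkcond /=; apply: eq_bigr => x _.
by rewrite unfold_in; case: (b x).
Qed.

Lemma nsinks_union G1 G2 (o1 : arrows G1) (o2 : arrows G2) :
  nsinks (aunion o1 o2) = (nsinks o1 + nsinks o2)%N.
Proof.
rewrite /nsinks !card_pred_sum big_sumType /=; congr addn.
- apply: eq_bigr => v _; congr nat_of_bool.
  apply/forallP/forallP => H e.
  + apply/forallP => c; have /forallP/(_ c) := H (inl e); done.
  + apply/forallP => c; case: e => e; last by [].
    by have /forallP/(_ c) := H e.
- apply: eq_bigr => v _; congr nat_of_bool.
  apply/forallP/forallP => H e.
  + apply/forallP => c; have /forallP/(_ c) := H (inr e); done.
  + apply/forallP => c; case: e => e; first by [].
    by have /forallP/(_ c) := H e.
Qed.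

Lemma Y_union G1 G2 (o1 : arrows G1) (o2 : arrows G2) :
  Y (aunion o1 o2) = smul (Y o1) (Y o2).
Proof.
apply: functional_extensionality => m.
rewrite /Y /smul Ycoef_union natr_sum; apply: eq_bigr => p _.
by rewrite natrM.
Qed.

Definition pos := (rat * {G : sgraph & arrows G})%type.

Definition lc (s : seq pos) : series :=
  fun m => \sum_(x <- s) x.1 * Y (projT2 x.2) m.

Fixpoint good (s : seq pos) : Prop :=
  match s with [::] => True | x :: s' => signed_poset (projT2 x.2) /\ good s' end.

Lemma good_cat s t : good s -> good t -> good (s ++ t).
Proof. by elim: s => [|x s IH] //= [? ?] ?; split => //; apply: IH. Qed.

Lemma good_map (I : Type) (F : I -> pos) (r : seq I) :
  (forall i, signed_poset (projT2 (F i).2)) -> good (map F r).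
Proof. by move=> H; elim: r => [|i r IH] //=. Qed.

Lemma good_map2 (F : pos -> pos) (r : seq pos) :
  (forall i, signed_poset (projT2 i.2) -> signed_poset (projT2 (F i).2)) ->
  good r -> good (map F r).
Proof. by move=> H; elim: r => [|i r IH] //= [? ?]; split; [apply: H | apply: IH]. Qed.

Lemma good_nth s x0 i : good s -> (i < size s)%N -> signed_poset (projT2 (nth x0 s i).2).
Proof.
elim: s i => [|x s IH] [|i] //=; first by case.
by move=> [_ Hs] Hi; apply: IH.
Qed.

Lemma inY_lc f : inY f -> exists s, good s /\ f = lc s.
Proof.
move=> [n [a [G [o [Ho ->]]]]].
exists [seq (a i, existT _ (G i) (o i)) | i <- index_enum 'I_n]; split.
  by apply: good_map => i; apply: Ho.
apply: functional_extensionality => m.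
by rewrite /lc big_map.
Qed.

Definition G0 : sgraph := @SGraph void void (fun e _ => e) (fun _ => true).
Definition o0 : arrows G0 := fun _ _ => true.
Definition d0 : pos := (0, existT _ G0 o0).

Lemma lc_inY s : good s -> inY (lc s).
Proof.
move=> Hs.
exists (size s), (fun i => (nth d0 s i).1),
  (fun i => projT1 (nth d0 s i).2),
  (fun i => projT2 (nth d0 s i).2); split.
  by move=> i; apply: good_nth.
apply: functional_extensionality => m.
by rewrite /lc (big_nth d0) big_mkord.
Qed.

Lemma xchg (I J : Type) (r : seq I) (r' : seq J) (F : I -> J -> rat) :
  \sum_(i <- r) \sum_(j <- r') F i j = \sum_(j <- r') \sum_(i <- r) F i j.
Proof.
elim: r => [|x r IH].
  by rewrite big_nil; apply/esym/big1 => j _; rewrite big_nil.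
rewrite big_cons IH -big_split /=; apply: eq_bigr => j _.
by rewrite big_cons.
Qed.

Definition prodl (s t : seq pos) : seq pos :=
  [seq (x.1 * y.1, existT _ (gunion (projT1 x.2) (projT1 y.2))
                            (aunion (projT2 x.2) (projT2 y.2))) | x <- s, y <- t].

Lemma good_prodl s t : good s -> good t -> good (prodl s t).
Proof.
elim: s => [|x s IH] //= [Hx Hs] Ht.
apply: good_cat; last exact: IH.
by apply: good_map2 => // y Hy /=; apply: union_poset.
Qed.

Lemma smul_lc s t : smul (lc s) (lc t) = lc (prodl s t).
Proof.
apply: functional_extensionality => m.
rewrite /smul /lc big_allpairs_dep /=.
symmetry.
under eq_bigr => x _ do under eq_bigr => y _ do
  rewrite Y_union /smul big_distrr /=.
under eq_bigr => x _ do rewrite xchg.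
rewrite xchg /=; apply: eq_bigr => p _.
rewrite big_distrl /=; apply: eq_bigr => x _.
rewrite big_distrr /=; apply: eq_bigr => y _.
by rewrite -!mulrA; congr (_ * _); rewrite mulrCA.
Qed.

Lemma Y_inY G (o : arrows G) : signed_poset o -> inY (Y o).
Proof.
move=> Ho.
have -> : Y o = lc [:: (1, existT _ G o)].
  by apply: functional_extensionality => m; rewrite /lc big_seq1 mul1r.
by apply: lc_inY.
Qed.

Lemma phi_lc (phi : series -> {poly rat}) :
  (forall (a : rat) (f g : series), inY f -> inY g ->
        phi (fun m => a * f m + g m) = a *: phi f + phi g) ->
  (forall (G : sgraph) (o : arrows G), signed_poset o ->
        phi (Y o) = 'X^(nsinks o)) ->
  forall s, good s ->
  phi (lc s) = \sum_(x <- s) x.1 *: 'X^(nsinks (projT2 x.2)).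
Proof.
move=> lin hY; elim => [|x s IH] /=.
  move=> _; rewrite big_nil.
  have HZ : inY (lc [::]) by apply: lc_inY.
  have := lin (-1) _ _ HZ HZ.
  have -> : (fun m => -1 * lc [::] m + lc [::] m) = lc [::].
    apply: functional_extensionality => m; rewrite /lc !big_nil.
    by rewrite mulr0 addr0.
  by rewrite scaleN1r addNr.
move=> [Hx Hs].
have -> : lc (x :: s) = (fun m => x.1 * Y (projT2 x.2) m + lc s m).
  by apply: functional_extensionality => m; rewrite /lc big_cons.
rewrite lin ?IH ?hY ?big_cons //; first exact: Y_inY.
exact: lc_inY.
Qed.

Theorem mainTheorem9 :
  (forall (G1 G2 : sgraph) (o1 : arrows G1) (o2 : arrows G2),
     signed_poset o1 -> signed_poset o2 ->
     Y (aunion o1 o2) = smul (Y o1) (Y o2)) /\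
  (forall f g : series, inY f -> inY g -> inY (smul f g)) /\
  (forall phi : series -> {poly rat},
     (forall (a : rat) (f g : series), inY f -> inY g ->
        phi (fun m => a * f m + g m) = a *: phi f + phi g) ->
     (forall (G : sgraph) (o : arrows G), signed_poset o ->
        phi (Y o) = 'X^(nsinks o)) ->
     forall f g : series, inY f -> inY g -> phi (smul f g) = phi f * phi g).
Proof.
split; first by move=> *; apply: Y_union.
split.
  move=> f g /inY_lc [s [Hs ->]] /inY_lc [t [Ht ->]].
  by rewrite smul_lc; apply: lc_inY; apply: good_prodl.
move=> phi lin hY f g /inY_lc [s [Hs ->]] /inY_lc [t [Ht ->]].
rewrite smul_lc !(phi_lc lin hY) //; last exact: good_prodl.
rewrite /prodl big_allpairs_dep /= big_distrl /=; apply: eq_bigr => x _.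
rewrite big_distrr /=; apply: eq_bigr => y _.
rewrite nsinks_union exprD -scalerAl -scalerAr scalerA.
by [].
Qed.
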